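(* Let $\mathbb F$ be a field, $A,B$ rings which are $\mathbb F$-algebras, $\mathcal E$ a right functional $A$-module and $\mathcal F$ a right functional $B$-module (all $\mathbb F$-vector spaces, maps $\mathbb F$-linear). The $\mathbb F$-algebra homomorphism $\pi\colon\mathrm{Hom}_A(\mathcal E)\otimes_{\mathbb F}\mathrm{Hom}_B(\mathcal F)\to\mathrm{Hom}_{A\otimes B}(\mathcal E\otimes\mathcal F)$, $\pi(S\otimes T)=S\otimes T$, restricts to an isomorphism $\mathcal K_A(\mathcal E)\otimes\mathcal K_B(\mathcal F)\to\mathcal K_{A\otimes B}(\mathcal E\otimes\mathcal F)$ and to an injection $\mathcal L_A(\mathcal E)\otimes\mathcal L_B(\mathcal F)\to\mathcal L_{A\otimes B}(\mathcal E\otimes\mathcal F)$.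
   Context: $G$ is a discrete group; all rings are associative, not necessarily commutative or unital $\mathbb F$-algebras with $G$-actions (trivial on $\mathbb F$), all tensor products are $\mathbb F$-balanced. A right functional $A$-module is a right $A$-module $\mathcal E$ with a $G$-action $S$ ($S_g(\xi a)=S_g(\xi)\alpha_g(a)$) and a $G$-invariant left $A$-submodule $\Theta_A(\mathcal E)\subseteq\mathrm{Hom}_A(\mathcal E,A)$. $\mathcal K_A(\mathcal E)$ is the ring of finite sums of $\theta_{\eta,\varphi}(\xi)=\eta\varphi(\xi)$; $\mathcal L_A(\mathcal E)$ is the ring of $V\in\mathrm{Hom}_A(\mathcal E)$ with $\varphi\circ V\in\Theta_A(\mathcal E)$ for all $\varphi\in\Theta_A(\mathcal E)$. The external tensor product $\mathcal E\otimes\mathcal F$ is a right $A\otimes B$-module with diagonal $G$-action and functional space consisting of all finite sums of $\varphi\otimes\psi$, $(\varphi\otimes\psi)(\xi\otimes\eta)=\varphi(\xi)\otimes\psi(\eta)$, for $\varphi\in\Theta_A(\mathcal E)$, $\psi\in\Theta_B(\mathcal F)$. *)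

(* Defs.v *)
From mathcomp Require Import all_boot all_algebra.
From mathcomp Require Import functions.
From Stdlib Require List.
Set Implicit Arguments. Unset Strict Implicit. Unset Printing Implicit Defensive.
Import GRing.Theory.
Local Open Scope ring_scope.

Section Defs.
Variable F : fieldType.

Definition is_group (G : Type) (gmul : G -> G -> G) (g1 : G) (ginv : G -> G)
  : Prop :=
  [/\ forall x y z, gmul x (gmul y z) = gmul (gmul x y) z,
      forall x, gmul g1 x = x, forall x, gmul x g1 = x,
      forall x, gmul (ginv x) x = g1 & forall x, gmul x (ginv x) = g1].

Definition is_nualg (A : lmodType F) (mul : A -> A -> A) : Prop :=
  [/\ forall a b c, mul a (mul b c) = mul (mul a b) c,
      forall a a' b, mul (a + a') b = mul a b + mul a' b,
      forall a b b', mul a (b + b') = mul a b + mul a b',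
      forall (k : F) a b, mul (k *: a) b = k *: mul a b
    & forall (k : F) a b, mul a (k *: b) = k *: mul a b].

Definition is_alg_action (G : Type) (gmul : G -> G -> G) (g1 : G)
  (A : lmodType F) (mul : A -> A -> A) (alpha : G -> A -> A) : Prop :=
  [/\ forall g (k : F) a a', alpha g (k *: a + a') = k *: alpha g a + alpha g a',
      forall g a b, alpha g (mul a b) = mul (alpha g a) (alpha g b),
      forall a, alpha g1 a = a
    & forall g h a, alpha (gmul g h) a = alpha g (alpha h a)].

Definition is_rmod (A : lmodType F) (mul : A -> A -> A)
  (E : lmodType F) (act : E -> A -> E) : Prop :=
  [/\ forall x x' a, act (x + x') a = act x a + act x' a,
      forall x a a', act x (a + a') = act x a + act x a',
      forall (k : F) x a, act (k *: x) a = k *: act x a,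
      forall (k : F) x a, act x (k *: a) = k *: act x a
    & forall x a b, act (act x a) b = act x (mul a b)].

Definition is_Hom_to (A : lmodType F) (mul : A -> A -> A)
  (E : lmodType F) (act : E -> A -> E) (phi : E -> A) : Prop :=
  (forall (k : F) x x', phi (k *: x + x') = k *: phi x + phi x') /\
  (forall x a, phi (act x a) = mul (phi x) a).

Definition is_Hom (A : lmodType F) (E : lmodType F) (act : E -> A -> E)
  (S : E -> E) : Prop :=
  (forall (k : F) x x', S (k *: x + x') = k *: S x + S x') /\
  (forall x a, S (act x a) = act (S x) a).

Definition is_functional_module (G : Type) (gmul : G -> G -> G) (g1 : G)
  (ginv : G -> G) (A : lmodType F) (mul : A -> A -> A) (alpha : G -> A -> A)
  (E : lmodType F) (act : E -> A -> E) (SG : G -> E -> E)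
  (Theta : (E -> A) -> Prop) : Prop :=
  [/\ is_rmod mul act,
      [/\ forall g (k : F) x x', SG g (k *: x + x') = k *: SG g x + SG g x',
          forall x, SG g1 x = x,
          forall g h x, SG (gmul g h) x = SG g (SG h x)
        & forall g x a, SG g (act x a) = act (SG g x) (alpha g a)],
      forall phi, Theta phi -> is_Hom_to mul act phi,
      [/\ Theta (fun _ => 0),
          forall phi psi, Theta phi -> Theta psi -> Theta (fun x => phi x + psi x),
          forall (k : F) phi, Theta phi -> Theta (fun x => k *: phi x)
        & forall a phi, Theta phi -> Theta (fun x => mul a (phi x))]
    &
      forall g phi, Theta phi -> Theta (fun x => alpha g (phi (SG (ginv g) x)))].

(* K_A(E): finite sums of theta_{eta,phi}, xi |-> eta phi(xi), phi in Theta. *)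
Definition in_K (A : lmodType F) (E : lmodType F) (act : E -> A -> E)
  (Theta : (E -> A) -> Prop) (T : E -> E) : Prop :=
  exists l : seq (E * (E -> A)),
    (forall p, List.In p l -> Theta p.2) /\
    T = (fun x => \sum_(p <- l) act p.1 (p.2 x)).

Definition in_L (A : lmodType F) (E : lmodType F) (act : E -> A -> E)
  (Theta : (E -> A) -> Prop) (V : E -> E) : Prop :=
  is_Hom act V /\ (forall phi, Theta phi -> Theta (fun x => phi (V x))).

(* Algebraic tensor products over F.  An element of U (x)_F V is       *)
(* represented by a formal finite sum  sum_i u_i (x) v_i, i.e. a list   *)
(* of pairs (scalars are absorbed in the first factor).  For F-subspaces *)
(* P <= U, Q <= V, a formal sum with entries in P x Q is ZERO in the     *)
(* tensor product P (x)_F Q iff every F-bilinear map on P x Q (to any    *)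
(* F-vector space) kills it -- this is the universal property.          *)
Definition bilinear_on (U V : lmodType F) (P : U -> Prop) (Q : V -> Prop)
  (W : lmodType F) (b : U -> V -> W) : Prop :=
  (forall (k : F) u u' v, P u -> P u' -> Q v ->
     b (k *: u + u') v = k *: b u v + b u' v) /\
  (forall (k : F) u v v', P u -> Q v -> Q v' ->
     b u (k *: v + v') = k *: b u v + b u v').

Definition tzero (U V : lmodType F) (P : U -> Prop) (Q : V -> Prop)
  (s : seq (U * V)) : Prop :=
  forall (W : lmodType F) (b : U -> V -> W), bilinear_on P Q b ->
    \sum_(p <- s) b p.1 p.2 = 0.

Definition tsub (U V : lmodType F) (s t : seq (U * V)) : seq (U * V) :=
  s ++ [seq (- p.1, p.2) | p <- t].

Definition tequiv (U V : lmodType F) (s t : seq (U * V)) : Prop :=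
  tzero (fun _ : U => True) (fun _ : V => True) (tsub s t).

Definition tact (A B E Fm : lmodType F) (actE : E -> A -> E)
  (actF : Fm -> B -> Fm) (z : seq (E * Fm)) (y : seq (A * B))
  : seq (E * Fm) :=
  [seq (actE p.1 q.1, actF p.2 q.2) | p <- z, q <- y].

Definition tfun (A B E Fm : lmodType F) (Phi : seq ((E -> A) * (Fm -> B)))
  (z : seq (E * Fm)) : seq (A * B) :=
  [seq (f.1 p.1, f.2 p.2) | f <- Phi, p <- z].

Definition in_Theta_tensor (A B E Fm : lmodType F)
  (ThE : (E -> A) -> Prop) (ThF : (Fm -> B) -> Prop)
  (Phi : seq ((E -> A) * (Fm -> B))) : Prop :=
  forall f, List.In f Phi -> ThE f.1 /\ ThF f.2.

(* element  sum_j theta_{zeta_j, Phi_j}  of K_{A(x)B}(E (x) F), applied *)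
Definition kapp (A B E Fm : lmodType F) (actE : E -> A -> E)
  (actF : Fm -> B -> Fm)
  (ks : seq (seq (E * Fm) * seq ((E -> A) * (Fm -> B)))) (z : seq (E * Fm))
  : seq (E * Fm) :=
  flatten [seq tact actE actF k.1 (tfun k.2 z) | k <- ks].

(* pi (sum_i S_i (x) T_i), applied to an element of E (x) F *)
Definition papp (E Fm : lmodType F) (s : seq ((E -> E) * (Fm -> Fm)))
  (z : seq (E * Fm)) : seq (E * Fm) :=
  [seq (st.1 p.1, st.2 p.2) | st <- s, p <- z].

End Defs.

(* Main.v *)
Require Import Defs.
From mathcomp Require Import all_boot all_algebra.
From mathcomp Require Import functions.
From Stdlib Require List.
From mathcomp Require Import boolp classical_sets.
Set Implicit Arguments. Unset Strict Implicit. Unset Printing Implicit Defensive.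
Import GRing.Theory.
Local Open Scope ring_scope.

Section FnSec.
Local Open Scope classical_set_scope.

Section Fn.
Variables (F : fieldType) (V : lmodType F) (v : V).
Hypothesis v0 : v != 0.

Let T := (V * F)%type.
Let fnl (G : set T) := forall x a b, G (x,a) -> G (x,b) -> a = b.
Let cls (G : set T) := forall k x a y b, G (x,a) -> G (y,b) -> G (k *: x + y, k * a + b).
Let good G := fnl G /\ cls G.
Let G0 : set T := [set p | exists c, p = (c *: v, c)].
Let P : set (set T) := fun G => good (G0 `|` G).

Let good_G0 : good G0.
Proof.
split.
  move=> x a b [c [-> ->]] [c' [E ->]].
  apply/eqP; rewrite -subr_eq0; apply/eqP.
  have : (c - c') *: v = 0 by rewrite scalerBl E subrr.
  by move/eqP; rewrite scaler_eq0 (negbTE v0) orbF => /eqP.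
move=> k x a y b [c [-> ->]] [c' [-> ->]]; exists (k * c + c').
by rewrite scalerDl scalerA.
Qed.

Let chainP (Fc : set (set T)) : Fc `<=` P -> total_on Fc subset ->
  P (\bigcup_(X in Fc) X).
Proof.
move=> FP tot.
have key : forall p q, (G0 `|` \bigcup_(X in Fc) X) p -> (G0 `|` \bigcup_(X in Fc) X) q ->
  exists H, [/\ good H, H p, H q & H `<=` (G0 `|` \bigcup_(X in Fc) X)].
  move=> p q [Gp|[X FX Xp]] [Gq|[Y FY Yq]].
  - by exists G0; split => // z Gz; left.
  - exists (G0 `|` Y); split; [exact: FP|by left|by right|].
    by move=> z [Gz|Yz]; [left|right; exists Y].
  - exists (G0 `|` X); split; [exact: FP|by right|by left|].
    by move=> z [Gz|Xz]; [left|right; exists X].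
  - have [XY|YX] := tot _ _ FX FY.
    + exists (G0 `|` Y); split; [exact: FP|by right; apply: XY|by right|].
      by move=> z [Gz|Yz]; [left|right; exists Y].
    + exists (G0 `|` X); split; [exact: FP|by right|by right; apply: YX|].
      by move=> z [Gz|Xz]; [left|right; exists X].
split.
  move=> x a b Ha Hb; have [H [[fH _] Hp Hq _]] := key _ _ Ha Hb.
  exact: fH Hp Hq.
move=> k x a y b Ha Hb; have [H [[_ cH] Hp Hq sub]] := key _ _ Ha Hb.
exact/sub/cH.
Qed.

Lemma exists_functional_aux : exists mu : V -> F,
  (forall k x y, mu (k *: x + y) = k * mu x + mu y) /\ mu v = 1.
Proof.
have [A [PA maxA]] := Zorn_bigcup chainP.
pose M := G0 `|` A.
have [fM cM] : fnl M /\ cls M := PA.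
have M00 : M (0, 0) by left; exists 0; rewrite scale0r.
have tot : forall x, exists a, M (x, a).
  move=> x; apply: contrapT => Hn.
  have Hn' : forall a, ~ M (x, a) by move=> a Ma; apply: Hn; exists a.
  pose B : set T := [set p | exists y a c, M (y, a) /\ p = (y + c *: x, a)].
  have MB : M `<=` B.
    by case=> y a My; exists y, a, 0; rewrite scale0r addr0.
  apply: (maxA B).
    split; first by move=> p Ap; apply: MB; right.
    move=> BA; apply: (Hn' 0); right; apply: BA.
    by exists 0, 0, 1; rewrite scale1r add0r.
  have GB : G0 `|` B = B.
    by apply/seteqP; split => p; [case=> // G0p; apply: MB; left|move=> ?; right].
  rewrite /P GB; split.
    move=> z a b [y [a1 [c [My [-> ->]]]]] [y' [a' [c' [My' [E ->]]]]].
    have cc : c = c'.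
      apply: contrapT => /eqP; rewrite -subr_eq0 => ne.
      apply: (Hn' ((c - c')^-1 * (- a1 + a'))).
      have -> : x = (c - c')^-1 *: ((-1) *: y + y') + 0.
        rewrite addr0 scaleN1r; apply: (scalerI ne); rewrite scalerA divff // scale1r.
        have E2 : y' = y + c *: x - c' *: x by rewrite E addrK.
        by rewrite E2 scalerBl addrA addKr.
      rewrite -[_ * _]addr0; apply: (cM) => //.
      by rewrite -[- a1]mulN1r; apply: (cM).
    move: E; rewrite cc => /addIr E; rewrite E in My.
    exact: (fM) My My'.
  move=> k z a z' b [y [a1 [c [My [-> ->]]]]] [y' [a' [c' [My' [-> ->]]]]].
  exists (k *: y + y'), (k * a1 + a'), (k * c + c'); split; first exact: (cM).
  congr (_, _); rewrite scalerDr scalerDl scalerA.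
  by rewrite -!addrA; congr (_ + _); rewrite addrCA.
pose mu x := projT1 (cid (tot x)).
have muP x : M (x, mu x) by rewrite /mu; case: cid.
exists mu; split.
  by move=> k x y; apply: (fM) (muP _) (cM _ _ _ _ _ (muP x) (muP y)).
apply: (fM) (muP v) _; left; exists 1; by rewrite scale1r.
Qed.
End Fn.

Lemma exists_functional (F : fieldType) (V : lmodType F) (v : V) : v != 0 ->
  exists mu : V -> F,
  (forall k x y, mu (k *: x + y) = k * mu x + mu y) /\ mu v = 1.
Proof. exact: exists_functional_aux. Qed.

End FnSec.

Lemma In_map (T1 T2 : Type) (f : T1 -> T2) (l : seq T1) y :
  List.In y (map f l) -> exists x, List.In x l /\ y = f x.
Proof.
elim: l => //= a l IH [<-|/IH [x [Hx ->]]]; first by exists a; split; [left|].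
by exists x; split; [right|].
Qed.

Lemma In_cat (T : Type) (l1 l2 : seq T) x :
  List.In x (l1 ++ l2) <-> List.In x l1 \/ List.In x l2.
Proof.
elim: l1 => /=; first by split; [right|case].
move=> a l IH; split.
  by case=> [<-|/IH[]]; [left; left|left; right|right].
by case=> [[<-|h]|h]; [left|right; apply/IH; left|right; apply/IH; right].
Qed.

Section Bil.
Variables (F : fieldType) (U V W : lmodType F) (P : U -> Prop) (Q : V -> Prop)
  (b : U -> V -> W).
Hypothesis hb : bilinear_on P Q b.

Lemma b0l v : P 0 -> Q v -> b 0 v = 0.
Proof.
move=> P0 Qv; have h := hb.1 1 0 0 v P0 P0 Qv.
rewrite scaler0 addr0 scale1r in h.
by apply: (addrI (b 0 v)); rewrite addr0 -h.
Qed.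

Lemma b0r u : P u -> Q 0 -> b u 0 = 0.
Proof.
move=> Pu Q0; have h := hb.2 1 u 0 0 Pu Q0 Q0.
rewrite scaler0 addr0 scale1r in h.
by apply: (addrI (b u 0)); rewrite addr0 -h.
Qed.

Hypothesis P0 : P 0.
Hypothesis clP : forall k u u', P u -> P u' -> P (k *: u + u').

Lemma bsuml (I : Type) (l : seq I) (c : I -> F) (f : I -> U) v :
  (forall i, List.In i l -> P (f i)) -> Q v ->
  P (\sum_(i <- l) c i *: f i) /\
  b (\sum_(i <- l) c i *: f i) v = \sum_(i <- l) c i *: b (f i) v.
Proof.
move=> Hf Qv; elim: l Hf => [|i l IH] Hf.
  by rewrite !big_nil; split => //; apply: b0l.
have [Pr Er] := IH (fun j h => Hf j (or_intror h)).
have Pi := Hf i (or_introl erefl).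
rewrite !big_cons; split; first exact: clP.
by rewrite hb.1 // Er.
Qed.

Hypothesis Q0 : Q 0.
Hypothesis clQ : forall k u u', Q u -> Q u' -> Q (k *: u + u').

Lemma bshift (I : Type) (l : seq I) (c : I -> F) (f : I -> U) (g : I -> V) t0 :
  (forall i, List.In i l -> P (f i) /\ Q (g i)) -> Q t0 ->
  \sum_(i <- l) b (f i) (c i *: t0 + g i) =
  b (\sum_(i <- l) c i *: f i) t0 + \sum_(i <- l) b (f i) (g i).
Proof.
move=> Hfg Qt.
rewrite (bsuml c (fun i h => (Hfg i h).1) Qt).2 -big_split /=.
elim: l Hfg => [|i l IH] Hfg; first by rewrite !big_nil.
rewrite !big_cons IH; last by move=> j h; apply: Hfg; right.
by have [Pf Qg] := Hfg i (or_introl erefl); rewrite hb.2.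
Qed.
End Bil.

Section InjGen.
Variables (F : fieldType) (E Fm : lmodType F).

Lemma inj_gen (P : (E -> E) -> Prop) (Q : (Fm -> Fm) -> Prop) :
  P 0 -> (forall k u u', P u -> P u' -> P (k *: u + u')) ->
  Q 0 -> (forall k u u', Q u -> Q u' -> Q (k *: u + u')) ->
  forall s, (forall st, List.In st s -> P st.1 /\ Q st.2) ->
  (forall x y, tzero (fun _ : E => True) (fun _ : Fm => True) [seq (st.1 x, st.2 y) | st <- s]) ->
  tzero P Q s.
Proof.
move=> P0 clP Q0 clQ s.
have [n] := ubnP (size s); elim: n s => // n IH [|[S0 T0] s'] /= Hn Hin Hxy W b hb.
  by rewrite big_nil.
rewrite big_cons /=.
have [PS0 QT0] := Hin _ (or_introl erefl).
have Hin' st : List.In st s' -> P st.1 /\ Q st.2 by move=> h; apply: Hin; right.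
case: (pselect (exists c : (E -> E) * (Fm -> Fm) -> F,
                   S0 = \sum_(st <- s') c st *: st.1)) => [[c Hc]|Hnc].
  pose s'' := [seq (st.1, c st *: T0 + st.2) | st <- s'].
  have Hin'' st : List.In st s'' -> P st.1 /\ Q st.2.
    move=> h0; have [st0 [h ->]] := In_map h0; simpl; have [h1 h2] := Hin' _ h; split => //.
    exact: clQ.
  have H1 : tzero P Q s''.
    apply: IH => //; first by rewrite size_map.
    move=> x y W' be hbe; rewrite -map_comp big_map /=.
    have := Hxy x y W' be hbe; rewrite big_cons big_map /= => h.
    have e : \sum_(j <- s') be (j.1 x) ((c j *: T0 + j.2) y) =
             \sum_(j <- s') be (j.1 x) (c j *: T0 y + j.2 y) by [].
    rewrite e (@bshift F E Fm W' (fun _ => True) (fun _ => True) be hbe I (fun _ _ _ _ _ => I) _ s' c (fun j => j.1 x) (fun j => j.2 y) (T0 y)) //.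
    have e2 : S0 x = \sum_(j <- s') c j *: j.1 x by rewrite Hc fct_sumE.
    by rewrite -e2.
  by move: (H1 W b hb); rewrite big_map (bshift hb P0 clP) // -Hc.
have T00 : T0 = 0.
  apply/funext => y; apply: contrapT => /eqP ne.
  have [mu [lin mu1]] := exists_functional ne.
  pose be := fun (e : E) (f : Fm) => mu f *: e.
  have hbe : bilinear_on (fun _ : E => True) (fun _ : Fm => True) be.
    split.
      by move=> k u u' v _ _ _; rewrite /be scalerDr !scalerA mulrC.
    by move=> k u v v' _ _ _; rewrite /be lin scalerDl scalerA.
  apply: Hnc; exists (fun st => - mu (st.2 y)); apply/funext => x.
  have := Hxy x y E be hbe; rewrite big_cons big_map /= /be mu1 scale1r.
  move/eqP; rewrite addr_eq0 => /eqP ->; rewrite fct_sumE -sumrN.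
  by apply: eq_bigr => st _; rewrite scaleNr.
subst T0; rewrite (b0r hb) // add0r; apply: IH => // x y W' be hbe.
by have := Hxy x y W' be hbe; rewrite big_cons /= (b0r hbe) // add0r.
Qed.
End InjGen.

Lemma In_allpairs (S T R : Type) (f : S -> T -> R) (s : seq S) (t : seq T) x :
  List.In x [seq f a b | a <- s, b <- t] ->
  exists a b, [/\ List.In a s, List.In b t & x = f a b].
Proof.
elim: s => //= a s IH h; have [h1|h1] := proj1 (In_cat _ _ _) h.
  by have [b [Hb ->]] := In_map h1; exists a, b; split => //; left.
by have [a' [b [Ha Hb ->]]] := IH h1; exists a', b; split => //; right.
Qed.

Lemma eq_big_In (R : nmodType) (I : Type) (l : seq I) (F1 F2 : I -> R) :
  (forall i, List.In i l -> F1 i = F2 i) ->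
  \sum_(i <- l) F1 i = \sum_(i <- l) F2 i.
Proof.
elim: l => [|i l IH] h; first by rewrite !big_nil.
by rewrite !big_cons h ?IH //; [move=> j hj; apply: h; right|left].
Qed.

Section Sums.
Variables (F : fieldType) (U V : lmodType F).

Definition seqv (s t : seq (U * V)) :=
  forall (W : lmodType F) (b : U -> V -> W),
  bilinear_on (fun _ => True) (fun _ => True) b ->
  \sum_(p <- s) b p.1 p.2 = \sum_(p <- t) b p.1 p.2.

Lemma seqv_tequiv s t : seqv s t -> tequiv s t.
Proof.
move=> h W b hb; rewrite /tsub big_cat big_map /= h //.
have bN u v : b (- u) v = - b u v.
  have := hb.1 (-1) u 0 v I I I.
  by rewrite addr0 scaleN1r (b0l hb) // addr0 scaleN1r.
by under eq_bigr do rewrite bN; rewrite sumrN subrr.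
Qed.

Lemma bsumL (W : lmodType F) (b : U -> V -> W) (I : Type) (l : seq I) (f : I -> U) v :
  bilinear_on (fun _ => True) (fun _ => True) b ->
  b (\sum_(i <- l) f i) v = \sum_(i <- l) b (f i) v.
Proof.
move=> hb; elim: l => [|i l IH]; first by rewrite !big_nil (b0l hb).
by rewrite !big_cons -IH -[f i]scale1r hb.1 // scale1r scale1r.
Qed.

Lemma bsumR (W : lmodType F) (b : U -> V -> W) (I : Type) (l : seq I) (f : I -> V) u :
  bilinear_on (fun _ => True) (fun _ => True) b ->
  b u (\sum_(i <- l) f i) = \sum_(i <- l) b u (f i).
Proof.
move=> hb; elim: l => [|i l IH]; first by rewrite !big_nil (b0r hb).
by rewrite !big_cons -IH -[f i]scale1r hb.2 // scale1r scale1r.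
Qed.
End Sums.

Section KL.
Variables (F : fieldType) (A E : lmodType F) (mul : A -> A -> A)
  (act : E -> A -> E) (Th : (E -> A) -> Prop).
Hypothesis rm : is_rmod mul act.
Hypothesis homT : forall phi, Th phi -> is_Hom_to mul act phi.
Hypothesis Th0 : Th (fun _ => 0).
Hypothesis ThD : forall phi psi, Th phi -> Th psi -> Th (fun x => phi x + psi x).
Hypothesis ThZ : forall (k : F) phi, Th phi -> Th (fun x => k *: phi x).

Lemma K0 : in_K act Th 0.
Proof. by exists [::]; split => //; apply/funext => x; rewrite big_nil. Qed.

Lemma Kcl k u u' : in_K act Th u -> in_K act Th u' -> in_K act Th (k *: u + u').
Proof.
case=> l [Hl ->] [l' [Hl' ->]].
exists ([seq (k *: p.1, p.2) | p <- l] ++ l'); split.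
  move=> p h; case: (proj1 (In_cat _ _ _) h) => [h1|h1]; last exact: Hl'.
  by have [q [Hq ->]] := In_map h1; exact: (Hl q Hq).
apply/funext => x; rewrite addrfctE scalrfctE /= big_cat big_map /= scaler_sumr.
by congr (_ + _); apply: eq_bigr => p _; case: rm => _ _ -> _ _.
Qed.

Lemma act0 a : act 0 a = 0.
Proof.
case: rm => addl _ _ _ _; have := addl 0 0 a; rewrite addr0 => h.
by apply: (addrI (act 0 a)); rewrite addr0 -h.
Qed.

Lemma L0 : in_L act Th 0.
Proof.
split; first split.
- by move=> k x x' /=; rewrite scaler0 addr0.
- by move=> x a /=; rewrite act0.
move=> phi Tp; have [lin _] := homT Tp.
have p0 : phi 0 = 0.
  have := lin 1 0 0; rewrite scaler0 addr0 scale1r => h.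
  by apply: (addrI (phi 0)); rewrite addr0 -h.
by have -> : (fun x => phi ((0 : E -> E) x)) = (fun _ => 0) by apply/funext => x /=.
Qed.

Lemma Lcl k u u' : in_L act Th u -> in_L act Th u' -> in_L act Th (k *: u + u').
Proof.
case=> [[lu hu] tu] [[lu' hu'] tu']; split; first split.
- move=> k' x x'; rewrite !addrfctE !scalrfctE /= lu lu' !scalerDr !scalerA mulrC addrACA.
  by rewrite [k' * k]mulrC.
- move=> x a; rewrite !addrfctE !scalrfctE /= hu hu'; case: rm => addl _ scl _ _.
  by rewrite addl scl.
move=> phi Tp; have [lin _] := homT Tp.
have -> : (fun x => phi ((k *: u + u') x)) =
          (fun x => k *: (fun y => phi (u y)) x + (fun y => phi (u' y)) x).
  by apply/funext => x; rewrite !addrfctE !scalrfctE /= lin.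
by apply: ThD; [apply: ThZ; apply: tu|apply: tu'].
Qed.
End KL.

Section Parts.
Variables (F : fieldType) (A B E Fm : lmodType F) (actE : E -> A -> E)
  (actF : Fm -> B -> Fm) (ThE : (E -> A) -> Prop) (ThF : (Fm -> B) -> Prop).

Lemma papp1 (s : seq ((E -> E) * (Fm -> Fm))) x y :
  papp s [:: (x, y)] = [seq (st.1 x, st.2 y) | st <- s].
Proof. by rewrite /papp; elim: s => //= st s ->. Qed.

Lemma tequiv_nil (l : seq (E * Fm)) :
  tequiv l [::] -> tzero (fun _ => True) (fun _ => True) l.
Proof. by rewrite /tequiv /tsub /= cats0. Qed.

Lemma part2 (s : seq ((E -> E) * (Fm -> Fm))) :
  (forall st, List.In st s -> in_K actE ThE st.1 /\ in_K actF ThF st.2) ->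
  exists ks : seq (seq (E * Fm) * seq ((E -> A) * (Fm -> B))),
    (forall k, List.In k ks -> in_Theta_tensor ThE ThF k.2) /\
    (forall z, seqv (papp s z) (kapp actE actF ks z)).
Proof.
elim: s => [|[S T] s IH] Hs.
  by exists [::]; split => // z W b hb.
have [ks [Hks Heq]] := IH (fun st h => Hs st (or_intror h)).
have [[lS [HS eS]] [lT [HT eT]]] := Hs _ (or_introl erefl).
simpl in eS, eT; subst S T.
exists ([seq ([:: (r.1, q.1)], [:: (r.2, q.2)]) | r <- lS, q <- lT] ++ ks); split.
  move=> k h; case: (proj1 (In_cat _ _ _) h) => [h1|h1]; last exact: Hks.
  have [r [q [Hr Hq ->]]] := In_allpairs h1.
  by move=> f /= [<-|//]; split; [apply: HS|apply: HT].
move=> z W b hb.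
rewrite /papp /= big_cat /kapp map_cat flatten_cat big_cat.
congr (_ + _); last exact: Heq.
rewrite big_flatten /= big_map big_map big_allpairs_dep /=.
symmetry.
under eq_bigr => r _ do under eq_bigr => q _ do
  rewrite /tact /tfun big_allpairs_dep big_seq1 big_allpairs_dep big_seq1 /=.
symmetry.
under eq_bigr => j _ do rewrite (bsumL _ _ _ hb).
rewrite (eq_bigr _ (fun j _ => eq_bigr _ (fun r _ => bsumR _ _ _ hb))).
rewrite exchange_big; apply: eq_bigr => r _ /=; rewrite exchange_big //.
Qed.

Lemma part3 (ks : seq (seq (E * Fm) * seq ((E -> A) * (Fm -> B)))) :
  (forall k, List.In k ks -> in_Theta_tensor ThE ThF k.2) ->
  exists s : seq ((E -> E) * (Fm -> Fm)),
    (forall st, List.In st s -> in_K actE ThE st.1 /\ in_K actF ThF st.2) /\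
    (forall z, seqv (papp s z) (kapp actE actF ks z)).
Proof.
elim: ks => [|k ks IH] Hks.
  by exists [::]; split => // z W b hb.
have [s [Hs Heq]] := IH (fun k h => Hks k (or_intror h)).
exists ([seq ((fun x => actE r.1 (f.1 x)), (fun x => actF r.2 (f.2 x)))
          | r <- k.1, f <- k.2] ++ s); split.
  move=> st h; case: (proj1 (In_cat _ _ _) h) => [h1|h1]; last exact: Hs.
  have [r [f [Hr Hf ->]]] := In_allpairs h1.
  have [T1 T2] := Hks k (or_introl erefl) f Hf.
  split.
    exists [:: (r.1, f.1)]; split; first by move=> p [<-|[]].
    by apply/funext => x; rewrite big_seq1.
  exists [:: (r.2, f.2)]; split; first by move=> p [<-|[]].
  by apply/funext => x; rewrite big_seq1.
move=> z W b hb.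
rewrite /papp allpairs_cat big_cat /kapp /= big_cat.
congr (_ + _); last exact: Heq.
rewrite big_allpairs_dep big_allpairs_dep /tact big_allpairs_dep /=.
by apply: eq_bigr => r _; rewrite /tfun big_allpairs_dep.
Qed.

Lemma part5a (s : seq ((E -> E) * (Fm -> Fm))) :
  (forall st, List.In st s -> in_L actE ThE st.1 /\ in_L actF ThF st.2) ->
  forall z y, seqv (papp s (tact actE actF z y)) (tact actE actF (papp s z) y).
Proof.
move=> Hs z y W b hb.
rewrite /papp /tact !big_allpairs_dep /=.
apply: eq_big_In => st Hst; have [[[_ h1] _] [[_ h2] _]] := Hs st Hst.
rewrite big_allpairs_dep; apply: eq_bigr => p _; apply: eq_bigr => q _.
by rewrite h1 h2.
Qed.

Lemma part5b (s : seq ((E -> E) * (Fm -> Fm))) :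
  (forall st, List.In st s -> in_L actE ThE st.1 /\ in_L actF ThF st.2) ->
  forall Phi, in_Theta_tensor ThE ThF Phi ->
  exists Phi', in_Theta_tensor ThE ThF Phi' /\
    forall z, seqv (tfun Phi (papp s z)) (tfun Phi' z).
Proof.
move=> Hs Phi HPhi.
exists [seq ((fun x => f.1 (st.1 x)), (fun x => f.2 (st.2 x))) | f <- Phi, st <- s].
split.
  move=> g h; have [f [st [Hf Hst ->]]] := In_allpairs h.
  have [T1 T2] := HPhi f Hf; have [[_ L1] [_ L2]] := Hs st Hst.
  by split; [apply: L1|apply: L2].
move=> z W b hb.
rewrite /tfun /papp !big_allpairs_dep /=.
by apply: eq_bigr => f _; rewrite big_allpairs_dep.
Qed.
End Parts.

Unset Implicit Arguments.
Set Strict Implicit.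

Theorem lemma11p1 (F : fieldType)
  (G : Type) (gmul : G -> G -> G) (g1 : G) (ginv : G -> G)
  (A : lmodType F) (mulA : A -> A -> A) (alphaA : G -> A -> A)
  (B : lmodType F) (mulB : B -> B -> B) (alphaB : G -> B -> B)
  (E : lmodType F) (actE : E -> A -> E) (SE : G -> E -> E)
  (ThE : (E -> A) -> Prop)
  (Fm : lmodType F) (actF : Fm -> B -> Fm) (SF : G -> Fm -> Fm)
  (ThF : (Fm -> B) -> Prop) :
  is_group gmul g1 ginv ->
  is_nualg mulA -> is_alg_action gmul g1 mulA alphaA ->
  is_nualg mulB -> is_alg_action gmul g1 mulB alphaB ->
  is_functional_module gmul g1 ginv mulA alphaA actE SE ThE ->
  is_functional_module gmul g1 ginv mulB alphaB actF SF ThF ->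
  [/\
   (* pi is injective on K_A(E) (x) K_B(F) *)
   forall s : seq ((E -> E) * (Fm -> Fm)),
     (forall st, List.In st s -> in_K actE ThE st.1 /\ in_K actF ThF st.2) ->
     (forall z, tequiv (papp s z) [::]) ->
     tzero (in_K actE ThE) (in_K actF ThF) s,
   (* pi maps K_A(E) (x) K_B(F) into K_{A(x)B}(E (x) F) *)
   forall s : seq ((E -> E) * (Fm -> Fm)),
     (forall st, List.In st s -> in_K actE ThE st.1 /\ in_K actF ThF st.2) ->
     exists ks : seq (seq (E * Fm) * seq ((E -> A) * (Fm -> B))),
       (forall k, List.In k ks -> in_Theta_tensor ThE ThF k.2) /\
       (forall z, tequiv (papp s z) (kapp actE actF ks z)),
   (* ... and onto K_{A(x)B}(E (x) F) *)
   forall ks : seq (seq (E * Fm) * seq ((E -> A) * (Fm -> B))),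
     (forall k, List.In k ks -> in_Theta_tensor ThE ThF k.2) ->
     exists s : seq ((E -> E) * (Fm -> Fm)),
       (forall st, List.In st s -> in_K actE ThE st.1 /\ in_K actF ThF st.2) /\
       (forall z, tequiv (papp s z) (kapp actE actF ks z)),
   (* pi is injective on L_A(E) (x) L_B(F) *)
   forall s : seq ((E -> E) * (Fm -> Fm)),
     (forall st, List.In st s -> in_L actE ThE st.1 /\ in_L actF ThF st.2) ->
     (forall z, tequiv (papp s z) [::]) ->
     tzero (in_L actE ThE) (in_L actF ThF) s
  & (* pi maps L_A(E) (x) L_B(F) into L_{A(x)B}(E (x) F) *)
   forall s : seq ((E -> E) * (Fm -> Fm)),
     (forall st, List.In st s -> in_L actE ThE st.1 /\ in_L actF ThF st.2) ->
     (forall (z : seq (E * Fm)) (y : seq (A * B)),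
        tequiv (papp s (tact actE actF z y)) (tact actE actF (papp s z) y)) /\
     (forall Phi : seq ((E -> A) * (Fm -> B)), in_Theta_tensor ThE ThF Phi ->
        exists Phi' : seq ((E -> A) * (Fm -> B)),
          in_Theta_tensor ThE ThF Phi' /\
          (forall z, tequiv (tfun Phi (papp s z)) (tfun Phi' z)))].
Proof.
move=> _ _ _ _ _ fmE fmF.
case: fmE => rmE _ homE [Th0E ThDE ThZE _] _.
case: fmF => rmF _ homF [Th0F ThDF ThZF _] _.
split.
- move=> s Hs Hz; apply: inj_gen => //.
  + exact: K0.
  + by move=> k u u' hu hu'; apply: (Kcl rmE).
  + exact: K0.
  + by move=> k u u' hu hu'; apply: (Kcl rmF).
  + by move=> x y; rewrite -papp1; apply: tequiv_nil; apply: Hz.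
- move=> s Hs; have [ks [H1 H2]] := part2 Hs.
  by exists ks; split => // z; apply: seqv_tequiv; apply: H2.
- move=> ks Hks; have [s [H1 H2]] := @part3 _ _ _ _ _ actE actF _ _ ks Hks.
  by exists s; split => // z; apply: seqv_tequiv; apply: H2.
- move=> s Hs Hz; apply: inj_gen => //.
  + exact: (L0 rmE homE Th0E).
  + by move=> k u u' hu hu'; apply: (Lcl rmE homE ThDE ThZE).
  + exact: (L0 rmF homF Th0F).
  + by move=> k u u' hu hu'; apply: (Lcl rmF homF ThDF ThZF).
  + by move=> x y; rewrite -papp1; apply: tequiv_nil; apply: Hz.
- move=> s Hs; split.
    by move=> z y; apply: seqv_tequiv; apply: (part5a Hs).
  move=> Phi HPhi; have [Phi' [H1 H2]] := part5b Hs HPhi.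
  by exists Phi'; split => // z; apply: seqv_tequiv; apply: H2.
Qed.
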